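(* If $n\equiv 15$ or $n\equiv 21 \pmod{24}$, then $IK_n$ is not a $G$-graph.
   Context: $K_n$ is the complete simple graph on $n$ vertices and $IK_n$ its incidence graph (the simple graph whose vertices are the vertices and edges of $K_n$, each edge adjacent exactly to its two end-points). For a group $G$ and a multiset $S$ of elements of $G$, $\Phi(G,S)$ is the multigraph whose vertex set is the union over the members $s$ of $S$ (with multiplicity) of the right cosets $\langle s\rangle x$, $x\in G$, with one edge labeled $g$ between $\langle s\rangle x$ and $\langle t\rangle y$ ($s,t$ distinct members of $S$) for each $g\in\langle s\rangle x\cap\langle t\rangle y$, and no other edges; a $G$-graph is a multigraph isomorphic (ignoring labels) to some $\Phi(G,S)$. *)

(* Defs.v *)
From mathcomp Require Import all_boot all_fingroup.
Set Implicit Arguments. Unset Strict Implicit. Unset Printing Implicit Defensive.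
Local Open Scope group_scope.

Record multigraph := Multigraph {
  mg_vert : finType;
  mg_mult : mg_vert -> mg_vert -> nat }.
Arguments mg_mult : clear implicits.

Definition mg_iso (A B : multigraph) : Prop :=
  exists f : mg_vert A -> mg_vert B,
    bijective f /\ forall u v, mg_mult A u v = mg_mult B (f u) (f v).

(* Phi(G,S): S is a multiset of k elements of G, given as S : 'I_k -> gT. *)
Section Phi.
Variables (gT : finGroupType) (G : {group gT}) (k : nat) (S : 'I_k -> gT).

Notation Phi_vert := {p : 'I_k * {set gT} | p.2 \in rcosets <[S p.1]> G}.

Definition Phi_mult (u v : Phi_vert) : nat :=
  if (val u).1 != (val v).1 then #|(val u).2 :&: (val v).2| else 0.

Definition Phi : multigraph := @Multigraph Phi_vert Phi_mult.
End Phi.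

(* IK_n: vertices are the vertices of K_n (inl v) and the edges of K_n
   (inr e, e a 2-subset of 'I_n); an edge e is adjacent exactly to its two
   end-points. Simple graph: multiplicity 0 or 1. *)
Definition IK_ok (n : nat) (x : 'I_n + {set 'I_n}) : bool :=
  if x is inr e then #|e| == 2 else true.
Notation IK_vert n := {x : 'I_n + {set 'I_n} | IK_ok x}.

Definition IK_adj (n : nat) (x y : IK_vert n) : bool :=
  match proj1_sig x, proj1_sig y with
  | inl v, inr e => v \in e
  | inr e, inl v => v \in e
  | _, _ => false
  end.

Definition IK (n : nat) : multigraph :=
  @Multigraph (IK_vert n) (fun x y : IK_vert n => nat_of_bool (IK_adj x y)).

Definition is_G_graph (Gamma : multigraph) : Prop :=
  exists (gT : finGroupType) (G : {group gT}) (k : nat) (S : 'I_k -> gT),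
    (forall i, S i \in G) /\ mg_iso (Phi G S) Gamma.

(* Main.v *)
Require Import Defs.
From mathcomp Require Import all_boot all_fingroup.
From mathcomp Require Import frobenius pgroup cyclic.
Set Implicit Arguments. Unset Strict Implicit. Unset Printing Implicit Defensive.
Local Open Scope group_scope.
Lemma core (gT : finGroupType) (G B : {group gT}) (n p q : nat) :
  B \subset G -> #|G : B| = n -> (n.-1 <= #|B|)%N -> (2 < n)%N ->
  (forall g h, g \in G -> h \in B -> h \in B :^ g -> h != 1 -> g \in B) ->
  prime p -> prime q -> (p %| n)%N -> (q %| n)%N -> ~~ (p %| n.-1)%N -> ~~ (q %| n.-1)%N ->
  p = q.
Proof.
move=> sBG iBG dB n2 F1 pp pq pn qn pn1 qn1.
have B1 : (1 < #|B|)%N by apply: leq_trans dB; case: n n2 {iBG pn qn pn1 qn1} => [|[|[|]]].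
have TI : normedTI B^# G B.
  apply/normedTI_memJ_P; split=> //.
    by rewrite -cards_eq0 (cardsD1 1) group1 /= add1n in B1 *; case: #|B^#| B1.
  move=> a g /setD1P[a1 aB] gG; apply/idP/idP.
    case/setD1P=> ag1 agB; apply: (F1 g (a ^ g)) => //; by rewrite memJ_conjg.
  by move=> gB; rewrite !inE groupJ ?(subsetP sBG) // conjg_eq1 a1.
have cardK := card_support_normedTI TI.
set K := class_support B^# G in cardK.
have sKG : K \subset G by apply: class_support_subG; apply: subset_trans sBG; apply: subsetDl.
have K1 : 1 \notin K.
  apply/negP => /imset2P[a g /setD1P[a1 _] _ e]; by move: a1; rewrite -(conjg_eq1 a g) -e eqxx.
have cB1 : #|B^#| = #|B|.-1 by rewrite (cardsD1 1 B) group1.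
have LG := Lagrange sBG; rewrite iBG in LG cardK.
set X := (G :\: K) :\ 1.
have cX : #|X| = n.-1.
  have : #|G :\: K| = n.
    rewrite cardsD (setIidPr sKG) cardK -LG cB1.
    by case: #|B| B1 => // d _ /=; rewrite mulSn addnK.
  move=> h; move: (cardsD1 1 (G :\: K)); rewrite h !inE K1 group1 /= add1n => ->.
  by [].
have XK : forall x h, x \in X -> h \in B -> x ^ h \in X.
  move=> x h; rewrite !inE => /and3P[x1 xK xG] hB.
  have hG := subsetP sBG h hB.
  rewrite conjg_eq1 x1 groupJ // andbT; apply: contra xK => /imset2P[a g aB gG e].
  rewrite -(conjgK h x) e -conjgM; apply/imset2P; exists a (g * h^-1) => //; by rewrite groupM ?groupV.
have free : forall x, x \in X -> {in B &, injective (conjg x)}.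
  move=> x xX h1 h2 h1B h2B e.
  have xG : x \in G by move: xX; rewrite !inE => /and3P[].
  set c := h1 * h2^-1.
  suff /eqP c1 : c == 1 by move/(canRL (mulgKV h2)): c1; rewrite mul1g.
  apply/negPn/negP => c1.
  have cB : c \in B by rewrite groupM ?groupV.
  have xc : x ^ c = x by rewrite /c conjgM e -conjgM mulgV conjg1.
  have xB : x \in B.
    apply: (F1 x c) => //.
    have : c ^ x = c by apply/conjg_fixP; rewrite commg1_sym; apply/conjg_fixP.
    by move=> cx; rewrite -cx memJ_conjg.
  move: xX; rewrite !inE => /and3P[x1 xK _]; move: xK.
  by rewrite (mem_class_support G (A:=B^#)) // !inE x1 xB.
have orb : forall x, x \in X -> X = [set x ^ h | h in B].
  move=> x xX; apply/eqP; rewrite eq_sym eqEcard; apply/andP; split.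
    by apply/subsetP=> _ /imsetP[h hB ->]; apply: XK.
  by rewrite card_in_imset ?cX //; apply: free.
have dB1 : #|B| = n.-1.
  have : (0 < #|X|)%N by rewrite cX; case: n n2 {iBG pn qn pn1 qn1 cX dB LG cardK} => [|[|]].
  rewrite card_gt0 => /set0Pn[x xX].
  by rewrite -cX (orb x xX) card_in_imset //; apply: free.
have inX : forall r, prime r -> (r %| n)%N -> ~~ (r %| n.-1)%N -> exists2 x, x \in X & #[x] = r.
  move=> r pr rn rn1.
  have : (r %| #|G|)%N by rewrite -LG dvdn_mull.
  case/(Cauchy pr) => x xG ox; exists x => //.
  rewrite !inE xG andbT; apply/andP; split.
    by apply/eqP => x1; move: ox; rewrite x1 order1 => r1; rewrite -r1 in pr.
  apply/negP=> /imset2P[a g /setD1P[_ aB] _ e]; move: rn1.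
  by rewrite -dB1 -ox e orderJ (order_dvdG aB).
case: (inX p pp pn pn1) => x xX ox; case: (inX q pq qn qn1) => y yX oy.
move: yX; rewrite (orb x xX) => /imsetP[h _ yh].
by rewrite -ox -oy yh orderJ.
Qed.
Lemma pow3mod e : (3 ^ e %% 24 \in [:: 1; 3; 9])%N.
Proof.
elim: e => [|e IH] //; rewrite expnS -modnMmr.
by move: IH; rewrite !inE => /or3P[] /eqP ->.
Qed.

Lemma nt n : (n %% 24 = 15 \/ n %% 24 = 21)%N ->
  [/\ (3 < n)%N, (3 %| n)%N, ~~ (3 %| n.-1)%N &
   exists2 q, prime q /\ q <> 3 & (q %| n)%N /\ ~~ (q %| n.-1)%N].
Proof.
move=> hn.
have n0 : (0 < n)%N by case: n hn => [|n] [].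
have n2 : (3 < n)%N by have := leq_mod n 24; case: hn => ->; apply: leq_trans.
have d3 : (3 %| n)%N.
  by rewrite (divn_eq n 24); case: hn => ->; rewrite dvdn_add // dvdn_mull.
have nd : forall r, (1 < r)%N -> (r %| n)%N -> ~~ (r %| n.-1)%N.
  move=> r r1 rn; apply/negP => rn1.
  have : (r %| n - n.-1)%N by rewrite dvdn_sub.
  by rewrite -(prednK n0) subSn // subnn dvdn1 => /eqP r1'; rewrite r1' in r1.
split=> //; first exact: nd.
have [m cm em] := pfactor_coprime (isT : prime 3) n0.
move: em; set e := logn 3 n => em.
have m1 : m != 1%N.
  apply/eqP => m1; move: hn (pow3mod e); rewrite em m1 mul1n.
  by case=> ->.
have m0 : (0 < m)%N by move: n0; rewrite em; case: m {cm em m1}.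
have m2 : (1 < m)%N by case: m m0 m1 {cm em} => [|[|]].
exists (pdiv m); first split; first exact: pdiv_prime.
  move=> q3; move: cm; rewrite /coprime.
  have : (pdiv m %| m)%N by apply: pdiv_dvd.
  by rewrite q3 => /gcdn_idPl ->.
have qn : (pdiv m %| n)%N by rewrite em dvdn_mulr // pdiv_dvd.
split=> //; apply: nd qn; exact: prime_gt1 (pdiv_prime m2).
Qed.
Section IKfacts.
Variable n : nat.
Local Notation W := (mg_vert (IK n)).
Definition isl (x : W) : bool := if proj1_sig x is inl _ then true else false.
Lemma adj_side (x y : W) : IK_adj x y -> isl x != isl y.
Proof. by case: x => [[a|e] ?]; case: y => [[b|e'] ?]. Qed.
Lemma no_triangle (x y z : W) : IK_adj x y -> IK_adj y z -> IK_adj x z -> False.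
Proof.
move=> h1 h2 h3; move: (adj_side h1) (adj_side h2) (adj_side h3).
by case: (isl x); case: (isl y); case: (isl z).
Qed.
Definition ivl (a : 'I_n) : W := exist (fun x => is_true (IK_ok x)) (inl a) isT.
Definition e2 (a b : 'I_n) : W := insubd (ivl a) (inr [set a; b]).
Lemma e2E a b : a != b -> proj1_sig (e2 a b) = inr [set a; b].
Proof.
move=> ab; rewrite /e2 (val_insubd (ivl a)) /=.
by rewrite cards2 ab.
Qed.
Lemma adj_e2 a b : a != b -> IK_adj (ivl a) (e2 a b) /\ IK_adj (ivl b) (e2 a b).
Proof. by move=> ab; rewrite /IK_adj e2E //= !inE !eqxx orbT. Qed.
Lemma adj_inl (x y : W) a : proj1_sig x = inl a -> IK_adj x y ->
  exists e, [/\ proj1_sig y = inr e, a \in e & #|e| = 2%N].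
Proof.
case: x => [[a'|e] ?] //= [<-]; case: y => [[b|e'] He'] //= ae.
by exists e'; split=> //; apply/eqP.
Qed.
Lemma common a b (y : W) : a != b -> IK_adj (ivl a) y -> IK_adj (ivl b) y -> y = e2 a b.
Proof.
move=> ab /(@adj_inl (ivl a) y a (erefl _)) [e [ye ae ce]].
move=> /(@adj_inl (ivl b) y b (erefl _)) [e' [ye' be ce']].
move: ye'; rewrite ye => -[ee]; subst e'.
apply: val_inj; rewrite /= e2E // ye; congr inr.
apply/eqP; rewrite eq_sym eqEcard ce cards2 ab andbT.
by apply/subsetP => z; rewrite !inE => /orP[] /eqP ->.
Qed.
Lemma isl_ivl (x : W) : isl x -> exists a, x = ivl a.
Proof. by case: x => [[a|e] ?] //= _; exists a; apply: val_inj. Qed.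
Lemma adj_sym (x y : W) : IK_adj x y = IK_adj y x.
Proof. by case: x => [[a|e] ?]; case: y => [[b|e'] ?]. Qed.
Lemma isl_ivlE a : isl (ivl a). Proof. by []. Qed.
Lemma ivl_inj : injective ivl.
Proof. by move=> a b /(congr1 val) [] . Qed.
End IKfacts.

Section PhiFacts.
Variables (n : nat) (gT : finGroupType) (G : {group gT}) (k : nat) (S : 'I_k -> gT).
Hypothesis SG : forall i, S i \in G.
Local Notation V := (mg_vert (Phi G S)).
Local Notation W := (mg_vert (IK n)).
Variables (f : V -> W) (g : W -> V).
Hypotheses (fK : cancel f g) (gK : cancel g f).
Hypothesis fm : forall u v, mg_mult (Phi G S) u v = nat_of_bool (IK_adj (f u) (f v)).
Variable v0 : V.

Definition idx (u : V) : 'I_k := (proj1_sig u).1.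
Definition cst (u : V) : {set gT} := (proj1_sig u).2.

Lemma cstP u : exists2 c, c \in G & cst u = <[S (idx u)]> :* c.
Proof.
have /imsetP[c cG e] := proj2_sig u.
by exists c; rewrite // /cst /idx e rcosetE.
Qed.

Lemma cst_sub u : cst u \subset G.
Proof.
have [c cG ->] := cstP u; apply/subsetP => t /rcosetP[a aA ->].
by rewrite groupM // (subsetP _ a aA) // cycle_subG.
Qed.

Lemma VP (u v : V) (h1 : idx u = idx v) (h2 : cst u = cst v) : u = v.
Proof.
move: h1 h2; rewrite /idx /cst => h1 h2; apply: val_inj => /=.
by rewrite [sval u]surjective_pairing [sval v]surjective_pairing h1 h2.
Qed.

Lemma multE u v : mg_mult (Phi G S) u v = if idx u != idx v then #|cst u :&: cst v| else 0%N.
Proof. by []. Qed.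

Lemma adj_pos u v t : idx u != idx v -> t \in cst u -> t \in cst v -> IK_adj (f u) (f v).
Proof.
move=> iuv tu tv; have : (0 < mg_mult (Phi G S) u v)%N.
  by rewrite multE iuv card_gt0; apply/set0Pn; exists t; rewrite inE tu tv.
by rewrite fm; case: IK_adj.
Qed.

Lemma adj_inv u v : IK_adj (f u) (f v) -> idx u != idx v /\ exists t, t \in cst u :&: cst v.
Proof.
move=> a; have := fm u v; rewrite a multE; case: ifP => // iuv h; split=> //.
by apply/set0Pn; rewrite -card_gt0 h.
Qed.

Lemma mult_uniq u v t s : idx u != idx v -> t \in cst u -> t \in cst v ->
  s \in cst u -> s \in cst v -> t = s.
Proof.
move=> iuv tu tv su sv; apply/eqP/negPn/negP => ts.
have : (1 < mg_mult (Phi G S) u v)%N.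
  rewrite multE iuv; apply: (@leq_trans #|[set t; s]|); first by rewrite cards2 ts.
  apply: subset_leq_card; apply/subsetP => z; rewrite !inE => /orP[] /eqP ->.
    by rewrite tu tv.
  by rewrite su sv.
by rewrite fm; case: IK_adj.
Qed.

Definition mkV (l : 'I_k) (t : gT) : V := insubd v0 (l, <[S l]> :* t).
Lemma mkVE l t : t \in G -> idx (mkV l t) = l /\ cst (mkV l t) = <[S l]> :* t.
Proof.
move=> tG; rewrite /idx /cst /mkV (val_insubd v0) /= ifT //.
by rewrite -rcosetE; apply: imset_f.
Qed.

Definition Rmul (h : gT) (u : V) : V := insubd v0 (idx u, cst u :* h).
Lemma RmulE h u : h \in G -> idx (Rmul h u) = idx u /\ cst (Rmul h u) = cst u :* h.
Proof.
move=> hG; rewrite /idx /cst /Rmul (val_insubd v0) /= ifT //.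
have [c cG ->] := cstP u; rewrite -rcosetM -rcosetE; apply: imset_f; exact: groupM.
Qed.

Lemma triangle (i j l : 'I_k) : i != j -> j != l -> i != l -> False.
Proof.
move=> ij jl il.
have [i1 ic] := mkVE i (group1 G); have [j1 jc] := mkVE j (group1 G).
have [l1 lc] := mkVE l (group1 G).
have m1 : forall a, (1 : gT) \in <[S a]> :* 1 by move=> a; rewrite rcoset1 group1.
apply: (@no_triangle n (f (mkV i 1)) (f (mkV j 1)) (f (mkV l 1))).
- by apply: (adj_pos (t := 1)); rewrite ?i1 ?j1 ?ic ?jc.
- by apply: (adj_pos (t := 1)); rewrite ?l1 ?j1 ?lc ?jc.
- by apply: (adj_pos (t := 1)); rewrite ?i1 ?l1 ?ic ?lc.
Qed.
Lemma cst_t u t : t \in cst u -> cst u = <[S (idx u)]> :* t.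
Proof.
have [c cG e] := cstP u; rewrite e => tc; apply/esym/rcoset_eqP; exact: tc.
Qed.

Section Main.
Hypothesis n3 : (3 < n)%N.
Variables (i j : 'I_k).
Hypotheses (ij : i != j) (sidei : isl (f (mkV i 1))).
Local Notation B := <[S i]>.
Local Notation A := <[S j]>.

Lemma allidx u : idx u = i \/ idx u = j.
Proof.
case: (eqVneq (idx u) i) => [|ui]; first by left.
case: (eqVneq (idx u) j) => [|uj]; first by right.
by exfalso; apply: (triangle (l := idx u) ij); rewrite eq_sym.
Qed.

Lemma dB : (n.-1 <= #|B|)%N.
Proof.
have [x0 fx0] := isl_ivl sidei.
have [i1 c1] := mkVE i (group1 G); rewrite rcoset1 in c1.
pose w z := g (e2 x0 z).
have wadj : forall z, z != x0 -> IK_adj (f (mkV i 1)) (f (w z)).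
  move=> z zx; rewrite /w gK fx0; have xz : x0 != z by rewrite eq_sym.
  by case: (adj_e2 xz).
pose psi z := odflt 1 [pick t in cst (mkV i 1) :&: cst (w z)].
have psiP : forall z, z != x0 -> psi z \in cst (mkV i 1) :&: cst (w z) /\ idx (w z) = j.
  move=> z zx; have [iw [t tP]] := adj_inv (wadj z zx); split.
    by rewrite /psi; case: pickP => [//|/(_ t)]; rewrite tP.
  by case: (allidx (w z)) => // e; move: iw; rewrite i1 e eqxx.
have inj : {in [set~ x0] &, injective psi}.
  move=> z z'; rewrite !in_setC1 => zx z'x e.
  have [/setIP[_ p1] j1] := psiP z zx; have [/setIP[_ p2] j2] := psiP z' z'x.
  have : w z = w z' by apply: VP; rewrite ?j1 ?j2 // (cst_t p1) (cst_t p2) e j1 j2.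
  move/(congr1 f); rewrite /w !gK => /(congr1 (@proj1_sig _ _)).
  rewrite !e2E 1?eq_sym // => -[] /setP /(_ z); rewrite !inE eqxx orbT (negbTE zx) /=.
  by move/esym/eqP.
have := card_in_imset inj; rewrite cardsC1 card_ord => <-.
apply: subset_leq_card; apply/subsetP => _ /imsetP[z zx ->]; move: zx; rewrite in_setC1 => zx.
by have [/setIP[] ] := psiP z zx; rewrite c1.
Qed.

Lemma sideC u : idx u = i -> isl (f u).
Proof.
move=> ui; apply/negPn/negP => nu.
case E: (proj1_sig (f u)) => [a|e]; first by move: nu; rewrite /isl E.
have [c cG cu] := cstP u; rewrite ui in cu.
have x0 : 'I_n by case: n n3 => // n' _; exact: ord0.
pose lab (y : W) : 'I_n := if proj1_sig y is inl a then a else x0.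
have tG : forall t, t \in cst u -> t \in G by move=> t; apply: (subsetP (cst_sub u)).
have key : forall t, t \in cst u -> f (mkV j t) = ivl (lab (f (mkV j t))) /\ lab (f (mkV j t)) \in e.
  move=> t tu; have [j1 jc] := mkVE j (tG t tu).
  have ad : IK_adj (f u) (f (mkV j t)).
    by apply: (adj_pos (t := t)); rewrite ?ui ?j1 ?jc ?rcoset_refl.
  have wl : isl (f (mkV j t)) by move: (adj_side ad); rewrite (negbTE nu); case: isl.
  have [b fb] := isl_ivl wl.
  rewrite fb /=; split=> //.
  have ad' := ad; rewrite adj_sym fb in ad'.
  have [e' [E' be _]] := @adj_inl n (ivl b) (f u) b (erefl _) ad'.
  by move: E'; rewrite E => -[->].
have inj : {in cst u &, injective (fun t => lab (f (mkV j t)))}.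
  move=> t s tu su e1.
  have [j1 jc] := mkVE j (tG t tu); have [j2 jc2] := mkVE j (tG s su).
  have : mkV j t = mkV j s.
    by apply: (can_inj fK); rewrite (proj1 (key t tu)) (proj1 (key s su)) e1.
  move=> ets; apply: (mult_uniq (u := u) (v := mkV j t)) => //.
  - by rewrite ui j1.
  - by rewrite jc rcoset_refl.
  - by rewrite ets jc2 rcoset_refl.
have ce : #|e| = 2%N.
  have [t tu] : exists t, t \in cst u by exists c; rewrite cu rcoset_refl.
  have [j1 jc] := mkVE j (tG t tu).
  have ad : IK_adj (f (mkV j t)) (f u).
    rewrite adj_sym; apply: (adj_pos (t := t)); rewrite ?ui ?j1 ?jc ?rcoset_refl //.
  have := @adj_inl n (f (mkV j t)) (f u) (lab (f (mkV j t))).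
  by rewrite {1}(proj1 (key t tu)) => /(_ (erefl _) ad) [e' [] ]; rewrite E => -[<-].
have : (#|cst u| <= 2)%N.
  rewrite -ce -(card_in_imset inj); apply: subset_leq_card; apply/subsetP => _ /imsetP[t tu ->].
  exact: (proj2 (key t tu)).
rewrite cu card_rcoset => B2; have := dB; move: B2 n3.
by case: n => [|[|[|[|m]]]] //= B2 _ h; have := leq_trans h B2.
Qed.

Lemma sideD u : idx u = j -> ~~ isl (f u).
Proof.
move=> uj; have [c cG cu] := cstP u; rewrite uj in cu.
have [i1 ic] := mkVE i cG.
have ad : IK_adj (f (mkV i c)) (f u).
  by apply: (adj_pos (t := c)); rewrite ?i1 ?uj ?ic ?cu ?rcoset_refl.
by have := adj_side ad; rewrite (sideC i1).
Qed.

Lemma iB : #|G : B| = n.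
Proof.
pose phi a := cst (g (ivl a)).
have gi : forall a, idx (g (ivl a)) = i.
  move=> a; case: (allidx (g (ivl a))) => // e; have := sideD e; by rewrite gK.
have inj : injective phi.
  move=> a b e; apply: ivl_inj; rewrite -(gK (ivl a)) -(gK (ivl b)); congr f.
  by apply: VP; rewrite ?gi.
rewrite /indexg; have -> : rcosets B G = phi @: setT.
  apply/eqP; rewrite eqEsubset; apply/andP; split; apply/subsetP => C.
    case/imsetP => c cG ->; have [i1 ic] := mkVE i cG.
    have [a fa] := isl_ivl (sideC i1).
    by apply/imsetP; exists a => //; rewrite /phi -fa fK ic rcosetE.
  case/imsetP => a _ ->; rewrite /phi; have := proj2_sig (g (ivl a)).
  by have := gi a; rewrite /idx => <-.
by rewrite card_imset // cardsT card_ord.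
Qed.

Lemma F1 y h : y \in G -> h \in B -> h \in B :^ y -> h != 1 -> y \in B.
Proof.
move=> yG hB hy h1; apply/negPn/negP => yB.
have hG : h \in G by apply: (subsetP _ h hB); rewrite cycle_subG.
have [i0 c0] := mkVE i (group1 G); rewrite rcoset1 in c0.
have [iy cy] := mkVE i yG.
have [a fa] := isl_ivl (sideC i0); have [b fb] := isl_ivl (sideC iy).
have ab : a != b.
  apply: contra yB => /eqP eab; have : mkV i 1 = mkV i y by apply: (can_inj fK); rewrite fa fb eab.
  by move/(congr1 cst); rewrite c0 cy => ->; rewrite rcoset_refl.
pose w := g (e2 a b).
have [ad1 ad2] := adj_e2 ab.
have a1 : IK_adj (f (mkV i 1)) (f w) by rewrite fa /w gK.
have a2 : IK_adj (f (mkV i y)) (f w) by rewrite fb /w gK.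
have [iw [t /setIP[t0 tw]]] := adj_inv a1.
have [iw2 [s /setIP[sy sw]]] := adj_inv a2.
have [rw rc] := RmulE w hG.
have e1 : IK_adj (ivl a) (f (Rmul h w)).
  rewrite -fa; apply: (adj_pos (t := t * h)).
  - by rewrite rw.
  - by move: t0; rewrite c0 => t0; rewrite groupM.
  - by rewrite rc mem_rcoset mulgK.
have e2' : IK_adj (ivl b) (f (Rmul h w)).
  rewrite -fb; apply: (adj_pos (t := s * h)); last by rewrite rc mem_rcoset mulgK.
    by rewrite rw.
    move: sy; rewrite cy !mem_rcoset => sy.
    move: hy; rewrite mem_conjg => hy.
    have -> : s * h * y^-1 = (s * y^-1) * h ^ y^-1 by rewrite /conjg invgK !mulgA mulgKV.
    by rewrite groupM.
have ww : Rmul h w = w.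
  by apply: (can_inj fK); rewrite (common ab e1 e2') /w gK.
have th : t * h \in cst w by rewrite -ww rc mem_rcoset mulgK.
have th0 : t * h \in cst (mkV i 1) by move: (t0); rewrite c0 => t0'; rewrite groupM.
have := mult_uniq iw t0 tw th0 th.
by move/(congr1 (mulg t^-1)); rewrite mulKg mulVg => /eqP; rewrite eq_sym (negbTE h1).
Qed.
End Main.
End PhiFacts.

Theorem corollary5 (n : nat) :
  (n %% 24 = 15 \/ n %% 24 = 21)%N -> ~ is_G_graph (IK n).
Proof.
move=> hn [gT [G [k [S [SG [f [[g fK gK] fm]]]]]]].
have [n3 d3 nd3 [q [pq q3] [qn nqn]]] := nt hn.
have n2 : (2 < n)%N by apply: leq_trans n3.
have n0 : (0 < n)%N by apply: leq_trans n3.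
have n1 : (1 < n)%N by apply: leq_trans n3.
pose a0 := Ordinal n0; pose a1 := Ordinal n1.
have a01 : a0 != a1 by [].
pose v0 := g (ivl a0).
have key : forall i j, i != j -> isl (f (mkV v0 i 1)) -> False.
  move=> i j ij si.
  have sB : <[S i]> \subset G by rewrite cycle_subG.
  have := @core gT G <[S i]>%G n 3 q sB (iB SG fK gK fm n3 ij si) (dB gK fm ij si) n2
    (@F1 _ _ _ _ _ SG _ _ fK gK fm _ n3 _ _ ij si) (isT : prime 3) pq d3 qn nd3 nqn.
  by move=> e; apply: q3.
have ad : IK_adj (f (g (ivl a0))) (f (g (e2 a0 a1))) by rewrite !gK; case: (adj_e2 a01).
have [iuv _] := adj_inv fm ad.
set i0 := idx (g (ivl a0)) in iuv; set j0 := idx (g (e2 a0 a1)) in iuv.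
have [ii ic] := mkVE v0 i0 (group1 G); have [jj jc] := mkVE v0 j0 (group1 G).
have ad2 : IK_adj (f (mkV v0 i0 1)) (f (mkV v0 j0 1)).
  by apply: (adj_pos fm (t := 1)); rewrite ?ii ?jj ?ic ?jc ?rcoset_refl.
have := adj_side ad2.
case si: (isl (f (mkV v0 i0 1))); first by move=> _; apply: (key i0 j0).
move=> sj; apply: (key j0 i0); first by rewrite eq_sym.
by move: sj; case: isl.
Qed.
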